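(* Let $a,c,p\in\mathbb{C}$ with $-c\notin\mathbb{N}\cup\{0\}$. Define sequences $(u_n)_{n\ge0}$ and $(v_n)_{n\ge0}$ by $u_0=1$, $u_1=\frac{a}{c}+ip$, $v_0=1$, $v_1=\frac{a}{c}-ip$ and, for all integers $n\ge1$, \[ u_{n+1}=\frac{a+ip(c+2n)+n}{(n+1)(c+n)}u_n-\frac{ip-p^2}{(n+1)(c+n)}u_{n-1}, \] \[ v_{n+1}=\frac{a-ip(c+2n)+n}{(n+1)(c+n)}v_n+\frac{ip+p^2}{(n+1)(c+n)}v_{n-1}. \] Then \[ \sin(pz)\,M(a,c;z)=\sum_{n=0}^\infty\frac{u_n-v_n}{2i}z^n,\qquad z\in\mathbb{C}. \]
   Context: Here $i$ is the imaginary unit. For $a\in\mathbb{C}$, $(a)_n=a(a+1)\cdots(a+n-1)$ denotes the Pochhammer symbol, with $(a)_0=1$. For $a,c\in\mathbb{C}$ with $-c\notin\mathbb{N}\cup\{0\}$, the confluent hypergeometric (Kummer) function is $M(a,c;z)=\sum_{n=0}^\infty \frac{(a)_n}{(c)_n\,n!}z^n$, $z\in\mathbb{C}$. *)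

(* Defs.v *)
From Stdlib Require Import Reals Arith.
From Coquelicot Require Import Coquelicot.
Open Scope C_scope.

Fixpoint poch (a : Complex.C) (n : nat) : Complex.C :=
  match n with
  | O => 1
  | S m => poch a m * (a + RtoC (INR m))
  end.

(* Sum of a complex series, computed componentwise with Coquelicot's real
   [Series] (the limit of the partial sums whenever the series converges). *)
Definition CSeries (f : nat -> Complex.C) : Complex.C :=
  (Series (fun n => Re (f n)), Series (fun n => Im (f n))).

Definition kummerM (a c z : Complex.C) : Complex.C :=
  CSeries (fun n => poch a n / (poch c n * RtoC (INR (Factorial.fact n))) * Cpow z n).

Definition Csin (w : Complex.C) : Complex.C :=
  CSeries (fun n => if Nat.even n then 0
                   else RtoC ((-1) ^ (Nat.div2 n)) / RtoC (INR (Factorial.fact n)) * Cpow w n).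

(* Main.v *)
Require Import Defs.
From Stdlib Require Import Reals Lia Lra.
From Coquelicot Require Import Coquelicot.
Open Scope C_scope.

Fixpoint csum (f : nat -> C) (n : nat) : C :=
  match n with O => f O | S m => csum f m + f (S m) end.

Lemma csum_ext_le f g n : (forall k, (k <= n)%nat -> f k = g k) -> csum f n = csum g n.
Proof.
  induction n; intros H; simpl. apply H; lia.
  rewrite IHn by (intros; apply H; lia). rewrite (H (S n)) by lia. reflexivity.
Qed.
Lemma csum_S f n : csum f (S n) = csum f n + f (S n).
Proof. reflexivity. Qed.
Lemma csum_plus f g n : csum (fun k => f k + g k) n = csum f n + csum g n.
Proof. induction n; simpl. reflexivity. rewrite IHn. ring. Qed.
Lemma csum_minus f g n : csum (fun k => f k - g k) n = csum f n - csum g n.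
Proof. induction n; simpl. reflexivity. rewrite IHn. ring. Qed.
Lemma csum_scal x f n : csum (fun k => x * f k) n = x * csum f n.
Proof. induction n; simpl. reflexivity. rewrite IHn. ring. Qed.
Lemma csum_shift f n : csum f (S n) = f O + csum (fun k => f (S k)) n.
Proof. induction n. simpl. reflexivity. change (csum f (S (S n)) = f O + (csum (fun k => f (S k)) n + f (S (S n)))).
  simpl in *. rewrite IHn. ring. Qed.
Lemma csum_Re f n : Re (csum f n) = sum_f_R0 (fun k => Re (f k)) n.
Proof. induction n. reflexivity. simpl sum_f_R0. rewrite <- IHn. reflexivity. Qed.
Lemma csum_Im f n : Im (csum f n) = sum_f_R0 (fun k => Im (f k)) n.
Proof. induction n. reflexivity. simpl sum_f_R0. rewrite <- IHn. reflexivity. Qed.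

Definition mk (a c : C) (j : nat) : C := poch a j / (poch c j * RtoC (INR (Factorial.fact j))).
Definition Ek (q : C) (k : nat) : C := Cpow q k / RtoC (INR (Factorial.fact k)).
Definition Fq (a c q : C) (n : nat) : C := csum (fun k => Ek q k * mk a c (n - k)%nat) n.
Definition Dm (a c : C) (j : nat) : C := RtoC (INR (S j)) * mk a c (S j).
Definition Gq (a c q : C) (n : nat) : C := csum (fun k => Ek q k * Dm a c (n - k)%nat) n.

Lemma INR_nz n : RtoC (INR (S n)) <> 0.
Proof. intro H. apply RtoC_inj in H. apply (not_0_INR (S n)); [lia|exact H]. Qed.
Lemma fact_nz n : RtoC (INR (Factorial.fact n)) <> 0.
Proof. intro H. apply RtoC_inj in H. apply (not_0_INR _ (Factorial.fact_neq_0 n)). exact H. Qed.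

Lemma Ek_S q k : RtoC (INR (S k)) * Ek q (S k) = q * Ek q k.
Proof.
  unfold Ek. change (Factorial.fact (S k)) with (S k * Factorial.fact k)%nat.
  rewrite mult_INR, RtoC_mult. simpl Cpow. field. split; [apply fact_nz| apply INR_nz].
Qed.

Lemma L1 q (h : nat -> C) N :
  csum (fun k => RtoC (INR k) * Ek q k * h (S N - k)%nat) (S N) = q * csum (fun k => Ek q k * h (N - k)%nat) N.
Proof.
  rewrite csum_shift. simpl INR at 1. rewrite <- csum_scal.
  replace (RtoC 0 * Ek q 0 * h (S N - 0)%nat) with (RtoC 0) by ring.
  rewrite Cplus_0_l. apply csum_ext_le. intros k _.
  transitivity (RtoC (INR (S k)) * Ek q (S k) * h (N - k)%nat). reflexivity. rewrite Ek_S. ring.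
Qed.

Lemma poch_nz c (hc : forall k : nat, c <> - RtoC (INR k)) j : poch c j <> 0.
Proof.
  induction j; simpl. intro H. apply RtoC_inj in H. lra.
  apply Cmult_neq_0. exact IHj. intro H. apply (hc j).
  replace c with (c + RtoC (INR j) - RtoC (INR j)) by ring. rewrite H. ring.
Qed.
Lemma cj_nz c (hc : forall k : nat, c <> - RtoC (INR k)) j : c + RtoC (INR j) <> 0.
Proof. intro H. apply (hc j). replace c with (c + RtoC (INR j) - RtoC (INR j)) by ring. rewrite H. ring. Qed.

Lemma mk_rec a c (hc : forall k : nat, c <> - RtoC (INR k)) j :
  (c + RtoC (INR j)) * Dm a c j = (a + RtoC (INR j)) * mk a c j.
Proof.
  unfold Dm, mk. change (Factorial.fact (S j)) with (S j * Factorial.fact j)%nat.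
  rewrite mult_INR, RtoC_mult. simpl poch.
  field. repeat split; auto using fact_nz, INR_nz, poch_nz, cj_nz.
Qed.

Lemma stepA a c q n : RtoC (INR (S n)) * Fq a c q (S n) = q * Fq a c q n + Gq a c q n.
Proof.
  unfold Fq at 1. rewrite <- csum_scal.
  rewrite (csum_ext_le _ (fun k => RtoC (INR k) * Ek q k * mk a c (S n - k)%nat
     + Ek q k * (RtoC (INR (S n - k)) * mk a c (S n - k)%nat))).
  - rewrite csum_plus, L1. f_equal. rewrite csum_S. cbv beta. rewrite Nat.sub_diag. simpl INR.
    rewrite Cmult_0_l, Cmult_0_r, Cplus_0_r. unfold Gq. apply csum_ext_le. intros k Hk.
    unfold Dm. rewrite <- (Nat.sub_succ_l k n Hk). reflexivity.
  - intros k Hk. replace (INR (S n)) with (INR k + INR (S n - k))%R by (rewrite <- plus_INR; f_equal; lia).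
    rewrite RtoC_plus. ring.
Qed.

Lemma stepB a c (hc : forall k : nat, c <> - RtoC (INR k)) q N :
  (RtoC (INR (S N)) + c) * Gq a c q (S N)
  = (a + RtoC (INR (S N))) * Fq a c q (S N) - q * Fq a c q N + q * Gq a c q N.
Proof.
  unfold Gq at 1. rewrite <- csum_scal.
  rewrite (csum_ext_le _ (fun k => (a + RtoC (INR (S N))) * (Ek q k * mk a c (S N - k)%nat)
       - RtoC (INR k) * Ek q k * mk a c (S N - k)%nat + RtoC (INR k) * Ek q k * Dm a c (S N - k)%nat)).
  - rewrite csum_plus, csum_minus, csum_scal, !L1. reflexivity.
  - intros k Hk. set (j := (S N - k)%nat).
    assert (HI : INR (S N) = (INR k + INR j)%R) by (rewrite <- plus_INR; f_equal; unfold j; lia).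
    rewrite HI, RtoC_plus.
    transitivity (Ek q k * ((c + RtoC (INR j)) * Dm a c j) + RtoC (INR k) * Ek q k * Dm a c j). ring.
    rewrite mk_rec by exact hc. ring.
Qed.

Lemma Frec a c (hc : forall k : nat, c <> - RtoC (INR k)) q N :
  RtoC (INR (S (S N))) * (c + RtoC (INR (S N))) * Fq a c q (S (S N))
  = (a + q * (c + 2 * RtoC (INR (S N))) + RtoC (INR (S N))) * Fq a c q (S N)
    - (q + q * q) * Fq a c q N.
Proof.
  transitivity ((c + RtoC (INR (S N))) * (RtoC (INR (S (S N))) * Fq a c q (S (S N)))). ring.
  rewrite stepA.
  transitivity (q * (c + RtoC (INR (S N))) * Fq a c q (S N) + (RtoC (INR (S N)) + c) * Gq a c q (S N)). ring.
  rewrite stepB by exact hc.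
  assert (HG : Gq a c q N = RtoC (INR (S N)) * Fq a c q (S N) - q * Fq a c q N) by (rewrite stepA; ring).
  rewrite HG. ring.
Qed.

Lemma Fq0 a c q : Fq a c q 0 = 1.
Proof. unfold Fq, Ek, mk. simpl. field. Qed.
Lemma Fq1 a c (hc : forall k : nat, c <> - RtoC (INR k)) q : Fq a c q 1 = a / c + q.
Proof.
  assert (c <> 0). { intro H. apply (hc 0%nat). rewrite H. simpl INR. rewrite <- RtoC_opp, Ropp_0. reflexivity. }
  unfold Fq, Ek, mk. simpl. field. auto.
Qed.

Lemma uniqF a c (hc : forall k : nat, c <> - RtoC (INR k)) q (w : nat -> C)
  (h0 : w 0%nat = 1) (h1 : w 1%nat = a / c + q)
  (hr : forall n : nat, (1 <= n)%nat ->
     w (S n) = (a + q * (c + 2 * RtoC (INR n)) + RtoC (INR n))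
                 / (RtoC (INR (S n)) * (c + RtoC (INR n))) * w n
             - (q + q * q) / (RtoC (INR (S n)) * (c + RtoC (INR n))) * w (n - 1)%nat) :
  forall n, w n = Fq a c q n.
Proof.
  assert (H : forall n, w n = Fq a c q n /\ w (S n) = Fq a c q (S n)).
  { induction n as [|n [IH1 IH2]].
    - split. rewrite h0, Fq0; reflexivity. rewrite h1, Fq1 by exact hc. reflexivity.
    - split. exact IH2. rewrite hr by lia. replace (S n - 1)%nat with n by lia.
      rewrite IH1, IH2.
      assert (Hd : RtoC (INR (S (S n))) * (c + RtoC (INR (S n))) <> 0)
        by (apply Cmult_neq_0; [apply INR_nz | apply cj_nz; exact hc]).
      pose proof (Frec a c hc q n) as HR.
      apply (f_equal (fun x => x / (RtoC (INR (S (S n))) * (c + RtoC (INR (S n)))))) in HR.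
      match type of HR with ?L = ?R => transitivity R; [field; repeat split; (try apply INR_nz; try apply (cj_nz c hc)) | rewrite <- HR; field; repeat split; (try apply INR_nz; try apply (cj_nz c hc))] end. }
  intro n. apply H.
Qed.

Definition Asin (w : C) (n : nat) : C := if Nat.even n then 0
                   else RtoC ((-1) ^ (Nat.div2 n)) / RtoC (INR (Factorial.fact n)) * Cpow w n.

Lemma Ci_nz : Ci <> 0.
Proof. intro H. injection H. lra. Qed.
Lemma Ci2 : Ci * Ci = RtoC (-1).
Proof. unfold Ci, Cmult, RtoC. simpl. f_equal; ring. Qed.
Lemma Cm1 : RtoC (-1) = - (1).
Proof. unfold RtoC, Copp. simpl. f_equal; ring. Qed.
Lemma two_nz : (2 : C) <> 0.
Proof. intro H. injection H. lra. Qed.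

Lemma sine_coef p z k :
  (Ek (Ci * p) k - Ek (- (Ci * p)) k) / (2 * Ci) * Cpow z k = Asin (p * z) k.
Proof.
  unfold Ek, Asin.
  replace (- (Ci * p)) with (RtoC (-1) * (Ci * p)) by (rewrite Cm1; ring).
  rewrite !Cpow_mult_l, <- !RtoC_pow.
  destruct (Nat.Even_or_Odd k) as [[l Hl]|[l Hl]]; subst k.
  - rewrite Nat.even_mul. simpl orb. cbv iota. rewrite pow_1_even. field.
    repeat split; auto using Ci_nz, two_nz, fact_nz.
  - replace (2 * l + 1)%nat with (S (2 * l)) by lia.
    rewrite Nat.div2_succ_double, pow_1_odd.
    replace (Nat.even (S (2 * l))) with false by (rewrite Nat.even_succ, Nat.odd_mul; reflexivity).
    rewrite Cpow_S, Cpow_mult_r.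
    replace (Ci ^ 2) with (RtoC (-1)) by (rewrite <- Ci2; simpl; ring).
    rewrite <- RtoC_pow. field. repeat split; auto using Ci_nz, two_nz, fact_nz.
Qed.

Lemma im_le_Cmod x : Rabs (Im x) <= Cmod x.
Proof. eapply Rle_trans; [|apply Rmax_Cmod]. apply Rmax_r. Qed.

Lemma ratio_series (b : nat -> R) : (forall n, 0 <= b n)%R ->
  (exists N, forall n, (N <= n)%nat -> b (S n) <= /2 * b n)%R -> ex_series b.
Proof.
  intros Hp [N HN].
  apply (proj2 (ex_series_incr_n b N)).
  apply (@ex_series_le R_AbsRing R_CompleteNormedModule _ (fun k => b N * (/2) ^ k)%R).
  - intro k. change norm with Rabs. rewrite Rabs_pos_eq by apply Hp.
    induction k. simpl. rewrite Nat.add_0_r. lra.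
    rewrite Nat.add_succ_r. eapply Rle_trans. apply HN. lia.
    simpl pow. pose proof (Hp (N + k)%nat). lra.
  - apply (ex_series_ext (fun k => scal (b N) ((/2)^k)%R)). intro; reflexivity.
    apply (@ex_series_scal R_AbsRing R_NormedModule). eexists. apply is_series_geom. rewrite Rabs_pos_eq; lra.
Qed.

Lemma big_N (x : R) : exists N : nat, (x <= INR N)%R.
Proof.
  destruct (Rle_dec 0 x) as [H|H].
  - destruct (nfloor_ex x H) as [n Hn]. exists (S n). rewrite S_INR. lra.
  - exists 0%nat. simpl. lra.
Qed.

Lemma mk_S a c (hc : forall k : nat, c <> - RtoC (INR k)) n :
  mk a c (S n) = (a + RtoC (INR n)) / ((c + RtoC (INR n)) * RtoC (INR (S n))) * mk a c n.
Proof.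
  pose proof (mk_rec a c hc n) as H. unfold Dm in H.
  assert (H1 := INR_nz n). assert (H2 := cj_nz c hc n).
  transitivity ((c + RtoC (INR n)) * (RtoC (INR (S n)) * mk a c (S n)) / ((c + RtoC (INR n)) * RtoC (INR (S n)))).
  field. split; assumption.
  rewrite H. field. split; assumption.
Qed.

Lemma kummer_abs a c (hc : forall k : nat, c <> - RtoC (INR k)) z :
  ex_series (fun n => Cmod (mk a c n * Cpow z n)).
Proof.
  apply ratio_series. intro; apply Cmod_ge_0.
  destruct (big_N (Cmod c + 2 * Cmod z + 2 * Cmod a + 1)) as [N HN]. exists N. intros n Hn.
  assert (Hn' : (INR N <= INR n)%R) by (apply le_INR; lia).
  rewrite (mk_S a c hc n), Cpow_S.
  set (r := (a + RtoC (INR n)) / ((c + RtoC (INR n)) * RtoC (INR (S n)))).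
  replace (r * mk a c n * (z * z ^ n)) with ((r * z) * (mk a c n * z ^ n)) by ring.
  rewrite Cmod_mult. apply Rmult_le_compat_r; [apply Cmod_ge_0|].
  assert (Hcn := cj_nz c hc n). assert (Hsn := INR_nz n).
  unfold r. rewrite Cmod_mult, Cmod_div, Cmod_mult by (apply Cmult_neq_0; assumption).
  rewrite (Cmod_R (INR (S n))), Rabs_pos_eq by apply pos_INR.
  assert (HA : (Cmod (a + RtoC (INR n)) <= Cmod a + INR n)%R).
  { eapply Rle_trans. apply Cmod_triangle. rewrite Cmod_R, Rabs_pos_eq by apply pos_INR. lra. }
  assert (HC : (INR n - Cmod c <= Cmod (c + RtoC (INR n)))%R).
  { assert (E : RtoC (INR n) = (c + RtoC (INR n)) + - c) by ring.
    pose proof (Cmod_triangle (c + RtoC (INR n)) (- c)) as T. rewrite <- E, Cmod_opp, Cmod_R, Rabs_pos_eq in T by apply pos_INR.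
    lra. }
  rewrite S_INR.
  set (A := Cmod (a + RtoC (INR n))) in *. set (Cc := Cmod (c + RtoC (INR n))) in *.
  pose proof (Cmod_ge_0 a). pose proof (Cmod_ge_0 c). pose proof (Cmod_ge_0 z). pose proof (Cmod_ge_0 (a + RtoC (INR n))).
  assert (Hkey : (A * Cmod z <= / 2 * (Cc * (INR n + 1)))%R).
  { apply Rle_trans with ((Cmod a + INR n) * Cmod z)%R. apply Rmult_le_compat_r; lra.
    apply Rle_trans with (/2 * ((INR n - Cmod c) * (INR n + 1)))%R.
    2: { apply Rmult_le_compat_l. lra. apply Rmult_le_compat_r. pose proof (pos_INR n); lra. lra. }
    assert (0 <= Cmod a * (INR n + 1 - Cmod z))%R by (apply Rmult_le_pos; lra).
    assert (0 <= (INR n - Cmod c - (2 * Cmod z + 2 * Cmod a + 1)) * (INR n + 1))%R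
      by (apply Rmult_le_pos; pose proof (pos_INR n); lra).
    nra. }
  assert (HD : (0 < Cc * (INR n + 1))%R) by (apply Rmult_lt_0_compat; pose proof (pos_INR n); lra).
  replace (A / (Cc * (INR n + 1)) * Cmod z)%R with ((A * Cmod z) * / (Cc * (INR n + 1)))%R by (field; lra).
  apply Rmult_le_reg_r with (Cc * (INR n + 1))%R; [exact HD|].
  rewrite Rmult_assoc, Rinv_l, Rmult_1_r by lra. lra.
Qed.

Lemma sin_abs w : ex_series (fun n => Cmod (Asin w n)).
Proof.
  apply (@ex_series_le R_AbsRing R_CompleteNormedModule _ (fun n => Cmod w ^ n / INR (Factorial.fact n))%R).
  - intro n. change norm with Rabs. rewrite Rabs_pos_eq by apply Cmod_ge_0.
    pose proof (INR_fact_lt_0 n). pose proof (pow_le (Cmod w) n (Cmod_ge_0 w)).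
    unfold Asin. destruct (Nat.even n).
    + rewrite Cmod_0. apply Rmult_le_pos. lra. left; apply Rinv_0_lt_compat; lra.
    + rewrite Cmod_mult, Cmod_div by apply fact_nz. rewrite !Cmod_R, pow_1_abs, Cmod_pow.
      rewrite Rabs_pos_eq by lra. right. field. lra.
  - apply ratio_series.
    + intro n. pose proof (INR_fact_lt_0 n). pose proof (pow_le (Cmod w) n (Cmod_ge_0 w)).
      apply Rmult_le_pos. lra. left; apply Rinv_0_lt_compat; lra.
    + destruct (big_N (2 * Cmod w)) as [N HN]. exists N. intros n Hn.
      assert (Hn' : (INR N <= INR n)%R) by (apply le_INR; lia).
      pose proof (INR_fact_lt_0 n). pose proof (pow_le (Cmod w) n (Cmod_ge_0 w)). pose proof (Cmod_ge_0 w).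
      change (Factorial.fact (S n)) with (S n * Factorial.fact n)%nat. rewrite mult_INR, S_INR.
      simpl pow. pose proof (pos_INR n).
      replace (Cmod w * Cmod w ^ n / ((INR n + 1) * INR (Factorial.fact n)))%R
        with ((Cmod w / (INR n + 1)) * (Cmod w ^ n / INR (Factorial.fact n)))%R by (field; lra).
      apply Rmult_le_compat_r.
      * apply Rmult_le_pos. lra. left; apply Rinv_0_lt_compat; lra.
      * apply Rmult_le_reg_r with (INR n + 1)%R. lra. unfold Rdiv. rewrite Rmult_assoc, Rinv_l, Rmult_1_r by lra.
        lra.
Qed.

Lemma sum_n_Re (f : nat -> C) n : Re (sum_n f n) = sum_n (fun k => Re (f k)) n.
Proof. induction n. now rewrite !sum_O. rewrite !sum_Sn, <- IHn. reflexivity. Qed.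
Lemma sum_n_Im (f : nat -> C) n : Im (sum_n f n) = sum_n (fun k => Im (f k)) n.
Proof. induction n. now rewrite !sum_O. rewrite !sum_Sn, <- IHn. reflexivity. Qed.
Lemma is_series_C (f : nat -> C) l : is_series (fun n => Re (f n)) (Re l) -> is_series (fun n => Im (f n)) (Im l) -> is_series f l.
Proof.
  unfold is_series; intros H1 H2.
  apply filterlim_locally; intro eps.
  pose proof (proj1 (filterlim_locally _ _) H1 eps) as H1'.
  pose proof (proj1 (filterlim_locally _ _) H2 eps) as H2'.
  generalize (filter_and _ _ H1' H2'). apply filter_imp. intros n [Ha Hb].
  split; simpl. rewrite <- sum_n_Re in Ha. exact Ha. rewrite <- sum_n_Im in Hb. exact Hb.
Qed.

Lemma abs_Re (A : nat -> C) : ex_series (fun n => Cmod (A n)) -> ex_series (fun n => Rabs (Re (A n))).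
Proof.
  intro H. apply (@ex_series_le R_AbsRing R_CompleteNormedModule _ (fun n => Cmod (A n))); [|exact H].
  intro n. change norm with Rabs. rewrite Rabs_Rabsolu. apply re_le_Cmod.
Qed.
Lemma abs_Im (A : nat -> C) : ex_series (fun n => Cmod (A n)) -> ex_series (fun n => Rabs (Im (A n))).
Proof.
  intro H. apply (@ex_series_le R_AbsRing R_CompleteNormedModule _ (fun n => Cmod (A n))); [|exact H].
  intro n. change norm with Rabs. rewrite Rabs_Rabsolu. apply im_le_Cmod.
Qed.

Lemma cauchy_C (A B : nat -> C) : ex_series (fun n => Cmod (A n)) -> ex_series (fun n => Cmod (B n)) ->
  is_series (fun n => csum (fun k => A k * B (n - k)%nat) n) (CSeries A * CSeries B).
Proof.
  intros HA HB.
  pose proof (abs_Re A HA) as HRA. pose proof (abs_Im A HA) as HIA.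
  pose proof (abs_Re B HB) as HRB. pose proof (abs_Im B HB) as HIB.
  pose proof (Series_correct _ (ex_series_Rabs _ HRA)) as SRA.
  pose proof (Series_correct _ (ex_series_Rabs _ HIA)) as SIA.
  pose proof (Series_correct _ (ex_series_Rabs _ HRB)) as SRB.
  pose proof (Series_correct _ (ex_series_Rabs _ HIB)) as SIB.
  pose proof (is_series_mult _ _ _ _ SRA SRB HRA HRB) as RR.
  pose proof (is_series_mult _ _ _ _ SIA SIB HIA HIB) as II.
  pose proof (is_series_mult _ _ _ _ SRA SIB HRA HIB) as RI.
  pose proof (is_series_mult _ _ _ _ SIA SRB HIA HRB) as IR.
  apply is_series_C.
  - pose proof (is_series_minus _ _ _ _ RR II) as H.
    eapply is_series_ext; [|exact H]. intro n. rewrite csum_Re. unfold plus, opp. simpl.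
    symmetry. rewrite minus_sum. unfold Rminus. reflexivity.
  - pose proof (is_series_plus _ _ _ _ RI IR) as H.
    eapply is_series_ext; [|exact H]. intro n. rewrite csum_Im. unfold plus. simpl.
    symmetry. rewrite plus_sum. reflexivity.
Qed.

Theorem theorem2p4 (a c p : Complex.C)
  (hc : forall k : nat, c <> - RtoC (INR k))
  (u v : nat -> Complex.C)
  (hu0 : u 0%nat = 1) (hu1 : u 1%nat = a / c + Ci * p)
  (hv0 : v 0%nat = 1) (hv1 : v 1%nat = a / c - Ci * p)
  (hu : forall n : nat, (1 <= n)%nat ->
     u (S n) = (a + Ci * p * (c + 2 * RtoC (INR n)) + RtoC (INR n))
                 / (RtoC (INR (S n)) * (c + RtoC (INR n))) * u n
             - (Ci * p - p * p) / (RtoC (INR (S n)) * (c + RtoC (INR n))) * u (n - 1)%nat)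
  (hv : forall n : nat, (1 <= n)%nat ->
     v (S n) = (a - Ci * p * (c + 2 * RtoC (INR n)) + RtoC (INR n))
                 / (RtoC (INR (S n)) * (c + RtoC (INR n))) * v n
             + (Ci * p + p * p) / (RtoC (INR (S n)) * (c + RtoC (INR n))) * v (n - 1)%nat) :
  forall z : Complex.C,
    is_series (fun n => (u n - v n) / (2 * Ci) * Cpow z n)
              (Csin (p * z) * kummerM a c z).
Proof.
  intro z.
  assert (Hi : Ci * Ci = - (1)) by (rewrite Ci2, Cm1; reflexivity).
  assert (Hu' : forall n, u n = Fq a c (Ci * p) n).
  { apply (uniqF a c hc); [exact hu0 | exact hu1 | ]. intros n Hn. rewrite hu by exact Hn.
    assert (E : Ci * p - p * p = Ci * p + Ci * p * (Ci * p)).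
    { transitivity (Ci * p + (Ci * Ci) * (p * p)). rewrite Hi. ring. ring. }
    rewrite E. reflexivity. }
  assert (Hv' : forall n, v n = Fq a c (- (Ci * p)) n).
  { apply (uniqF a c hc); [exact hv0 | rewrite hv1; ring | ]. intros n Hn. rewrite hv by exact Hn.
    assert (E : Ci * p + p * p = - (- (Ci * p) + - (Ci * p) * - (Ci * p))).
    { transitivity (Ci * p - (Ci * Ci) * (p * p)). rewrite Hi. ring. ring. }
    rewrite E. field. split; [apply cj_nz; exact hc | apply INR_nz]. }
  change (Csin (p * z) * kummerM a c z) with
    (CSeries (Asin (p * z)) * CSeries (fun n => mk a c n * Cpow z n)).
  eapply is_series_ext; [|apply cauchy_C; [apply sin_abs | apply kummer_abs; exact hc]].
  intro n. cbv beta. match goal with |- ?L = ?R => change (@eq C L R) end. rewrite Hu', Hv'. unfold Fq. rewrite <- csum_minus.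
  transitivity ((/ (2 * Ci) * Cpow z n) * csum (fun k => Ek (Ci * p) k * mk a c (n - k)%nat - Ek (- (Ci * p)) k * mk a c (n - k)%nat) n).
  2: { field. apply Ci_nz. }
  rewrite <- csum_scal. apply csum_ext_le. intros k Hk.
  rewrite <- sine_coef.
  assert (Ez : Cpow z n = Cpow z k * Cpow z (n - k)) by (rewrite <- Cpow_add_r; f_equal; lia).
  rewrite Ez. field. apply Ci_nz.
Qed.
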